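(* Let $(P,\trianglerighteq)$ be a transitive relation and let $(P,\succ)$ be a poset minimally induced by $(P,\trianglerighteq)$. Then the width of $(P,\succ)$ equals the width of $(P,\trianglerighteq)$.
   Context: A transitive relation is a pair $(P,\trianglerighteq)$ with $\trianglerighteq\subseteq P\times P$ transitive (not necessarily irreflexive). Two elements $x,y$ are incomparable with respect to a relation $R$ if neither $(x,y)\in R$ nor $(y,x)\in R$; the width of a transitive relation (or poset) is the maximum size of a set of mutually incomparable elements. A poset is a pair $(P,\succ)$ with $\succ$ irreflexive and transitive. A poset $(P,\succ)$ is induced by $(P,\trianglerighteq)$ if $\succ\subseteq\trianglerighteq$; it is minimally induced if, for every pair $(x,y)\in\trianglerighteq\setminus\succ$, the relation $\succ\cup\{(x,y)\}$ does not generate a valid partial order, i.e. the directed graph on $P$ with edge set $\succ\cup\{(x,y)\}$ contains a directed cycle. *)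

(* Defs.v *)
From mathcomp Require Import all_boot.
Set Implicit Arguments. Unset Strict Implicit. Unset Printing Implicit Defensive.

Section Defs.
Variable P : finType.

Definition transitive_rel (R : rel P) : Prop :=
  forall x y z, R x y -> R y z -> R x z.

Definition is_poset (S : rel P) : Prop :=
  (forall x, ~~ S x x) /\ transitive_rel S.

Definition incomparable (R : rel P) (x y : P) : bool :=
  ~~ R x y && ~~ R y x.

Definition antichain (R : rel P) (A : {set P}) : bool :=
  [forall x in A, forall y in A, (x != y) ==> incomparable R x y].

Definition width (R : rel P) : nat :=
  \max_(A : {set P} | antichain R A) #|A|.

Definition has_dcycle (e : rel P) : Prop :=
  exists x (s : seq P), [/\ s != [::], path e x s & last x s = x].

Definition add_edge (S : rel P) (a b : P) : rel P :=
  fun x y => S x y || ((x == a) && (y == b)).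

Definition induced (S T : rel P) : Prop :=
  is_poset S /\ forall x y, S x y -> T x y.

Definition minimally_induced (S T : rel P) : Prop :=
  induced S T /\
  forall x y, T x y -> ~~ S x y -> has_dcycle (add_edge S x y).

End Defs.

(* Main.v *)
Require Import Defs.
From mathcomp Require Import all_boot.

Section L.
Variable P : finType.
Variables (S : rel P) (a b : P).
Hypothesis Str : transitive_rel S.

Lemma path_add u s : s != [::] -> path (add_edge S a b) u s ->
  S u (last u s) \/ ((u == a) || S u a) /\ ((b == last u s) || S b (last u s)).
Proof.
elim: s u => [//|w s IH] u _ /= /andP[e p].
case: s IH p => [|w' s'] IH p /=.
  move: e; rewrite /add_edge => /orP[->|/andP[/eqP e1 /eqP e2]]; first by left.
  by right; rewrite e1 e2 !eqxx.
have := IH w isT p; rewrite /= => H.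
move: e; rewrite /add_edge => /orP[Suw|/andP[/eqP e1 /eqP e2]]; last first.
  subst u w.
  case: H => [H|[H1 H2]]; right; split=> //; rewrite ?eqxx //.
  by rewrite H orbT.
  case: H => [H|[H1 H2]]; first by left; exact: Str Suw H.
  right; split=> //; apply/orP; right.
  by case/orP: H1 => [/eqP<-//|H1]; exact: Str Suw H1.
Qed.
End L.

Theorem lemma4 (P : finType) (T S : rel P) :
  transitive_rel T -> minimally_induced S T -> width S = width T.
Proof.
move=> _ [[[Sirr Str] ST] Hmin].
have key : forall x y, x != y -> T x y -> S x y || S y x.
  move=> x y nxy Txy; case Sxy: (S x y) => //=.
  have [z [s [sn p l]]] := Hmin x y Txy (negbT Sxy).
  have := @path_add P S x y Str z s sn p; rewrite l => [[H|[H1 H2]]].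
    by have := Sirr z; rewrite H.
  case/orP: H1 => [/eqP e1|H1]; case/orP: H2 => [/eqP e2|H2]; subst.
  - by rewrite eqxx in nxy.
  - by [].
  - by [].
  - exact: Str H2 H1.
have E : forall A, antichain S A = antichain T A.
  move=> A; rewrite /antichain /incomparable.
  apply: eq_forallb_in => x _; apply: eq_forallb_in => y _.
  case nxy: (x != y) => //=.
  rewrite -!negb_or; congr negb.
  apply/idP/idP => /orP[H|H].
  - by rewrite ST.
  - by rewrite (ST _ _ H) orbT.
  - by apply: key.
  - by rewrite orbC; apply: key => //; rewrite eq_sym.
by rewrite /width; apply: eq_bigl => A; rewrite E.
Qed.
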